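(* On the sphere $S^2=\{\underline r\in\mathbb{R}^3:\langle\underline r,\underline r\rangle=1\}$, for $\underline v\in\mathbb{R}^3$ define the vector fields $X[\underline v](\underline r)=\underline v-\underline r\,\langle \underline v,\underline r\rangle$ and $Y[\underline v](\underline r)=\underline v\times\underline r$, and let $X_i=X[\underline e_i]$, $Y_i=Y[\underline e_i]$ for the standard basis $\underline e_1,\underline e_2,\underline e_3$ of $\mathbb{R}^3$. Let $$\psi=\sum_{i,j=1}^3\Big(Y[\underline e_i\times\underline e_j]\otimes Y_j-X_j\otimes X[\underline e_i\times\underline e_j]\Big)\otimes Y_i\ \in\ \mathrm{diff}(S^2)\otimes_{\mathbb{R}}\mathrm{diff}(S^2)\otimes_{\mathbb{R}}\mathrm{diff}(S^2),$$ and let $\pi$ be the natural map from $\mathrm{diff}(S^2)^{\otimes_{\mathbb{R}}3}$ to the triple tensor product $\mathrm{diff}(S^2)\otimes_{C^\infty(S^2)}\mathrm{diff}(S^2)\otimes_{C^\infty(S^2)}\mathrm{diff}(S^2)$ of the module of vector fields over $C^\infty(S^2)$. Then $\pi\psi=0$.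
   Context: $\langle\ ,\ \rangle$ is the standard inner product and $\times$ the vector cross product on $\mathbb{R}^3$; $\mathrm{diff}(S^2)$ denotes the Lie algebra of smooth vector fields on $S^2$. *)

(* Defs.v *)
From HB Require Import structures.
From mathcomp Require Import all_boot all_order all_algebra.
From mathcomp Require Import all_classical all_reals all_analysis.
Set Implicit Arguments. Unset Strict Implicit. Unset Printing Implicit Defensive.
Import Order.TTheory GRing.Theory Num.Theory.
Import numFieldNormedType.Exports.
Local Open Scope ring_scope.

Section Defs.
Variable R : realType.
Local Notation V := 'rV[R]_3.

Definition dot (u v : V) : R := \sum_(k < 3) u 0 k * v 0 k.

Definition cross (u v : V) : V :=
  \row_(k < 3) (u 0 (ordS k) * v 0 (ordS (ordS k))
                - u 0 (ordS (ordS k)) * v 0 (ordS k)).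

Definition ebase (i : 'I_3) : V := delta_mx 0 i.

Definition S2 := {r : V | dot r r == 1}.

Fixpoint iterD (vs : seq V) (f : V -> R) : V -> R :=
  match vs with
  | [::] => f
  | v :: vs' => fun x => 'D_v (iterD vs' f) x
  end.

Definition smoothR3 (f : V -> R) : Prop :=
  forall (vs : seq V) (x : V), differentiable (iterD vs f) x.

Definition smoothS2 (f : S2 -> R) : Prop :=
  exists g : V -> R, smoothR3 g /\ forall r : S2, f r = g (val r).

Definition is_vf (X : S2 -> V) : Prop :=
  (forall r : S2, dot (X r) (val r) = 0) /\
  (forall k : 'I_3, smoothS2 (fun r => X r 0 k)).

Definition Xf (v : V) : S2 -> V := fun r => v - dot v (val r) *: val r.
Definition Yf (v : V) : S2 -> V := fun r => cross v (val r).

Definition vf_add (X Y : S2 -> V) : S2 -> V := fun r => X r + Y r.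
Definition vf_scale (f : S2 -> R) (X : S2 -> V) : S2 -> V := fun r => f r *: X r.

(* T is additive in each argument and C^infinity(S^2)-balanced on vector
   fields, i.e. T induces a map out of diff(S^2) (x)_{C^oo} diff(S^2)
   (x)_{C^oo} diff(S^2) (universal property of the tensor product). *)
Definition Cinf_trilinear (M : zmodType)
    (T : (S2 -> V) -> (S2 -> V) -> (S2 -> V) -> M) : Prop :=
  [/\ (forall A A' B C, is_vf A -> is_vf A' -> is_vf B -> is_vf C ->
         T (vf_add A A') B C = T A B C + T A' B C),
      (forall A B B' C, is_vf A -> is_vf B -> is_vf B' -> is_vf C ->
         T A (vf_add B B') C = T A B C + T A B' C),
      (forall A B C C', is_vf A -> is_vf B -> is_vf C -> is_vf C' ->
         T A B (vf_add C C') = T A B C + T A B C'),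
      (forall f A B C, smoothS2 f -> is_vf A -> is_vf B -> is_vf C ->
         T (vf_scale f A) B C = T A (vf_scale f B) C) &
      (forall f A B C, smoothS2 f -> is_vf A -> is_vf B -> is_vf C ->
         T A (vf_scale f B) C = T A B (vf_scale f C))].

End Defs.

(* Main.v *)
Require Import Defs.
From HB Require Import structures.
From mathcomp Require Import all_boot all_order all_algebra.
From mathcomp Require Import all_classical all_reals all_analysis.
From mathcomp Require Import ring lra.
Import Order.TTheory GRing.Theory Num.Theory.
Import numFieldNormedType.Exports.
Local Open Scope ring_scope.

Set Implicit Arguments. Unset Strict Implicit.
Section Poly.
Variable R : realType.
Local Notation V := 'rV[R]_3.

Inductive pexpr := PC of R | PX of 'I_3 | PAdd of pexpr & pexpr | PMul of pexpr & pexpr.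

Fixpoint peval (p : pexpr) (x : V) : R :=
  match p with
  | PC c => c
  | PX k => x 0 k
  | PAdd p q => peval p x + peval q x
  | PMul p q => peval p x * peval q x
  end.

Fixpoint pder (v : V) (p : pexpr) : pexpr :=
  match p with
  | PC c => PC 0
  | PX k => PC (v 0 k)
  | PAdd p q => PAdd (pder v p) (pder v q)
  | PMul p q => PAdd (PMul p (pder v q)) (PMul q (pder v p))
  end.

Lemma peval_diff p x : differentiable (peval p) x.
Proof.
elim: p => [c|k|p IHp q IHq|p IHp q IHq] /=.
- exact: differentiable_cst.
- exact: differentiable_coord.
- exact: differentiableD.
- exact: differentiableM.
Qed.

Lemma peval_der v p x : 'D_v (peval p) x = peval (pder v p) x.
Proof.
elim: p x => [c|k|p IHp q IHq|p IHp q IHq] x /=.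
- exact: derive_cst.
- rewrite deriveE; last exact: differentiable_coord.
  have @f : {linear 'M[R]_(1, 3) -> R}.
    by exists (fun N : 'M[R]_(_, _) => N 0 k); do 2![eexists]; do ?[constructor];
     rewrite ?mxE// => ? *; rewrite ?mxE//; move=> ?; rewrite !mxE.
  rewrite (_ : (fun _ => _) = f) // diff_lin //; exact: coord_continuous.
- rewrite (deriveD (f:=peval p) (g:=peval q)) ?IHp ?IHq //; exact: diff_derivable (peval_diff _ _).
- rewrite (deriveM (f:=peval p) (g:=peval q)) ?IHp ?IHq; try exact: diff_derivable (peval_diff _ _).
  by rewrite /GRing.scale /=.
Qed.

Fixpoint pders (vs : seq V) p := if vs is v :: vs' then pder v (pders vs' p) else p.

Lemma peval_smooth p : smoothR3 (peval p).
Proof.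
move=> vs x.
suff -> : @Defs.iterD R vs (peval p) = peval (pders vs p) by apply: peval_diff.
elim: vs => //= v vs ->; apply/funext => y; exact: peval_der.
Qed.

Definition i0 : 'I_3 := @Ordinal 3 0 isT.
Definition i1 : 'I_3 := @Ordinal 3 1 isT.
Definition i2 : 'I_3 := @Ordinal 3 2 isT.

Lemma sum3 (N : nmodType) (F : 'I_3 -> N) : \sum_(k < 3) F k = F i0 + F i1 + F i2.
Proof.
rewrite !big_ord_recr big_ord0 /= add0r.
by congr (_ + _ + _); congr (F _); apply: val_inj.
Qed.

Lemma ord3P (P : 'I_3 -> Prop) : P i0 -> P i1 -> P i2 -> forall k, P k.
Proof.
move=> H0 H1 H2 [[|[|[|m]]] Hm] //.
- by rewrite (_ : Ordinal Hm = i0) //; apply: val_inj.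
- by rewrite (_ : Ordinal Hm = i1) //; apply: val_inj.
- by rewrite (_ : Ordinal Hm = i2) //; apply: val_inj.
Qed.

Lemma ordS0 : ordS i0 = i1. Proof. exact: val_inj. Qed.
Lemma ordS1 : ordS i1 = i2. Proof. exact: val_inj. Qed.
Lemma ordS2 : ordS i2 = i0. Proof. exact: val_inj. Qed.

Lemma ebaseE (a k : 'I_3) : ebase R a 0 k = (a == k)%:R.
Proof. by rewrite /ebase mxE eqxx /= eq_sym. Qed.

Lemma dotE (u w : V) : dot u w = u 0 i0 * w 0 i0 + u 0 i1 * w 0 i1 + u 0 i2 * w 0 i2.
Proof. by rewrite /dot sum3. Qed.

Lemma crossE (u w : V) k : cross u w 0 k =
  u 0 (ordS k) * w 0 (ordS (ordS k)) - u 0 (ordS (ordS k)) * w 0 (ordS k).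
Proof. by rewrite mxE. Qed.


Lemma e01 : (i0 == i1) = false. Proof. by []. Qed.
Lemma e02 : (i0 == i2) = false. Proof. by []. Qed.
Lemma e10 : (i1 == i0) = false. Proof. by []. Qed.
Lemma e12 : (i1 == i2) = false. Proof. by []. Qed.
Lemma e20 : (i2 == i0) = false. Proof. by []. Qed.
Lemma e21 : (i2 == i1) = false. Proof. by []. Qed.

Definition pYc (w : 'I_3 -> R) a : pexpr := PAdd (PMul (PC (w (ordS a))) (PX (ordS (ordS a))))
   (PMul (PC (- w (ordS (ordS a)))) (PX (ordS a))).
Definition pdotc (w : 'I_3 -> R) := PAdd (PAdd (PMul (PC (w i0)) (PX i0)) (PMul (PC (w i1)) (PX i1)))
   (PMul (PC (w i2)) (PX i2)).
Definition pXc (w : 'I_3 -> R) a := PAdd (PC (w a)) (PMul (PC (-1)) (PMul (pdotc w) (PX a))).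
Definition ev (j k : 'I_3) : R := (j == k)%:R.
Definition ce (i j k : 'I_3) : R :=
  ev i (ordS k) * ev j (ordS (ordS k)) - ev i (ordS (ordS k)) * ev j (ordS k).
Definition Pterm i j a b c :=
  PAdd (PMul (PMul (pYc (ce i j) a) (pYc (ev j) b)) (pYc (ev i) c))
       (PMul (PC (-1)) (PMul (PMul (pXc (ev j) a) (pXc (ce i j) b)) (pYc (ev i) c))).

Lemma key_id (x : V) a b c :
  \sum_(i < 3) \sum_(j < 3) peval (Pterm i j a b c) x =
  (dot x x - 1) * (x 0 a * ((b == c)%:R - x 0 b * x 0 c) - ((a == c)%:R - x 0 a * x 0 c) * x 0 b).
Proof.
rewrite !sum3 dotE.
move: a b c; apply: ord3P; apply: ord3P; apply: ord3P;
rewrite /Pterm /pYc /pXc /pdotc /ce /ev /= ?(ordS0, ordS1, ordS2) ?(eqxx, e01, e02, e10, e12, e20, e21) /=;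
ring.
Qed.

End Poly.
Arguments PC {R}. Arguments PX {R}. Arguments PAdd {R}. Arguments PMul {R}.
Arguments i0. Arguments i1. Arguments i2.


Section VF.
Set Implicit Arguments. Unset Strict Implicit.
Variable R : realType.
Implicit Types q : pexpr R.
Local Notation V := 'rV[R]_3.
Local Notation pexpr := (pexpr R).
Local Notation S := (S2 R).
Definition sc (p : pexpr) : S -> R := fun r => peval p (val r).
Definition Xb (a : 'I_3) : S -> V := Xf (ebase R a).
Definition vsum (F : 'I_3 -> S -> V) : S -> V := fun r => \sum_(a < 3) F a r.
Definition tang (F : S -> V) := forall r : S, dot (F r) (val r) = 0.
Definition hasp (F : S -> V) (p : 'I_3 -> pexpr) := forall r k, F r 0 k = peval (p k) (val r).
Definition pvf F := tang F /\ exists p, hasp F p.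

Lemma sphere (r : S) : dot (val r) (val r) = 1.
Proof. exact/eqP/(valP r). Qed.

Lemma sc_smooth p : smoothS2 (sc p).
Proof. by exists (peval p); split => //; apply: peval_smooth. Qed.

Lemma pvf_vf F : pvf F -> is_vf F.
Proof.
case=> Ht [p Hp]; split => // k; exists (peval (p k)); split; first exact: peval_smooth.
by move=> r; rewrite Hp.
Qed.

Lemma dotDl (u w x : V) : dot (u + w) x = dot u x + dot w x.
Proof. by rewrite !dotE !mxE; ring. Qed.

Lemma dotZl c (u x : V) : dot (c *: u) x = c * dot u x.
Proof. by rewrite !dotE !mxE; ring. Qed.

Lemma pvf_add F G : pvf F -> pvf G -> pvf (vf_add F G).
Proof.
move=> [HF [p Hp]] [HG [q Hq]]; split.
  by move=> r; rewrite /vf_add dotDl HF HG addr0.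
by exists (fun k => PAdd (p k) (q k)) => r k; rewrite /vf_add mxE Hp Hq.
Qed.

Lemma pvf_scale q F : pvf F -> pvf (vf_scale (sc q) F).
Proof.
move=> [HF [p Hp]]; split.
  by move=> r; rewrite /vf_scale dotZl HF mulr0.
by exists (fun k => PMul q (p k)) => r k; rewrite /vf_scale mxE Hp.
Qed.

Lemma vsum3 F : vsum F = vf_add (vf_add (F i0) (F i1)) (F i2).
Proof. by apply/funext => r; rewrite /vsum sum3. Qed.

Lemma pvf_vsum F : (forall a, pvf (F a)) -> pvf (vsum F).
Proof. by move=> H; rewrite vsum3; apply: pvf_add; [apply: pvf_add|]. Qed.

Lemma hasp_Xf (v : V) : hasp (Xf v) (pXc (fun k => v 0 k)).
Proof.
by move=> r k; rewrite /Xf /pXc /pdotc /= !mxE dotE; ring.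
Qed.

Lemma tang_Xf (v : V) : tang (Xf v).
Proof.
by move=> r; rewrite /Xf dotDl -scaleNr dotZl sphere; ring.
Qed.

Lemma hasp_Yf (v : V) : hasp (Yf v) (pYc (fun k => v 0 k)).
Proof.
by move=> r k; rewrite /Yf /pYc /= crossE; ring.
Qed.

Lemma tang_Yf (v : V) : tang (Yf v).
Proof.
move=> r; rewrite /Yf dotE !crossE ?(ordS0, ordS1, ordS2); ring.
Qed.

Lemma pvf_Xf v : pvf (Xf v).
Proof. by split; [apply: tang_Xf | eexists; apply: hasp_Xf]. Qed.

Lemma pvf_Yf v : pvf (Yf v).
Proof. by split; [apply: tang_Yf | eexists; apply: hasp_Yf]. Qed.

Lemma expand_scale q F p : tang F -> hasp F p ->
  vf_scale (sc q) F = vsum (fun c => vf_scale (sc (PMul q (p c))) (Xb c)).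
Proof.
move=> HF Hp; apply/funext => r; apply/rowP => k.
rewrite /vsum /vf_scale /Xb /Xf /sc /= summxE sum3 !mxE -!Hp.
have := HF r; rewrite dotE => H.
rewrite !dotE !ebaseE.
have {}H : F r 0 i0 * sval r 0 i0 + F r 0 i1 * sval r 0 i1 + F r 0 i2 * sval r 0 i2 = 0 := H.
move: k; apply: ord3P; rewrite ?(eqxx, e01, e02, e10, e12, e20, e21) /=;
  apply/eqP; rewrite -subr_eq0; apply/eqP;
  match goal with |- _ - (_ * _ * (_ - (_ * _ + _ * _ + _ * _) * ?z) + _ + _) = 0 =>
    transitivity (peval q (sval r) * z * (F r 0 i0 * sval r 0 i0 + F r 0 i1 * sval r 0 i1 + F r 0 i2 * sval r 0 i2)); [ring | by rewrite H mulr0] end.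
Qed.

Definition Z0 : S -> V := fun _ => 0.
Lemma pvf_Z0 : pvf Z0.
Proof.
split; first by move=> r; rewrite /Z0 dotE !mxE; ring.
by exists (fun _ => PC 0) => r k; rewrite /Z0 mxE.
Qed.

Lemma hasp_Yf' (v : V) w : (forall k, v 0 k = w k) -> hasp (Yf v) (pYc w).
Proof.
move=> Hw; have -> : w = (fun k => v 0 k) by apply/funext => k; rewrite Hw.
exact: hasp_Yf.
Qed.

Lemma hasp_Xf' (v : V) w : (forall k, v 0 k = w k) -> hasp (Xf v) (pXc w).
Proof.
move=> Hw; have -> : w = (fun k => v 0 k) by apply/funext => k; rewrite Hw.
exact: hasp_Xf.
Qed.

Section Tri.
Variables (M : zmodType) (T : (S -> V) -> (S -> V) -> (S -> V) -> M).
Hypothesis HT : Cinf_trilinear T.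

Lemma T_sum1 F B C : (forall a, pvf (F a)) -> pvf B -> pvf C ->
  T (vsum F) B C = \sum_(a < 3) T (F a) B C.
Proof.
case: HT => h1 _ _ _ _ HF HB HC; rewrite vsum3 sum3 !h1 //; try exact: pvf_vf.
exact/pvf_vf/pvf_add.
Qed.

Lemma T_sum2 F A C : (forall a, pvf (F a)) -> pvf A -> pvf C ->
  T A (vsum F) C = \sum_(a < 3) T A (F a) C.
Proof.
case: HT => _ h1 _ _ _ HF HB HC; rewrite vsum3 sum3 !h1 //; try exact: pvf_vf.
exact/pvf_vf/pvf_add.
Qed.

Lemma T_sum3 F A B : (forall a, pvf (F a)) -> pvf A -> pvf B ->
  T A B (vsum F) = \sum_(a < 3) T A B (F a).
Proof.
case: HT => _ _ h1 _ _ HF HB HC; rewrite vsum3 sum3 !h1 //; try exact: pvf_vf.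
exact/pvf_vf/pvf_add.
Qed.

Definition g a b c q := T (Xb a) (Xb b) (vf_scale (sc q) (Xb c)).

Lemma pvf_sX q c : pvf (vf_scale (sc q) (Xb c)).
Proof. exact/pvf_scale/pvf_Xf. Qed.

Lemma g_ext a b c q1 q2 : (forall x, peval q1 x = peval q2 x) -> g a b c q1 = g a b c q2.
Proof.
by move=> H; rewrite /g (_ : sc q1 = sc q2) //; apply/funext => r; rewrite /sc H.
Qed.

Lemma g_zero a b c q : (forall r : S, sc q r = 0) -> g a b c q = 0.
Proof.
move=> H; rewrite /g (_ : vf_scale (sc q) (Xb c) = Z0); last first.
  by apply/funext => r; rewrite /vf_scale H scale0r.
case: HT => _ _ h3 _ _.
have E : vf_add Z0 Z0 = Z0 by apply/funext => r; rewrite /vf_add addr0.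
have := h3 (Xb a) (Xb b) Z0 Z0.
rewrite E; move/(_ (pvf_vf (pvf_Xf _)) (pvf_vf (pvf_Xf _)) (pvf_vf pvf_Z0) (pvf_vf pvf_Z0)).
by move=> h; apply/eqP; rewrite -(addrI _ (etrans (addr0 _) h)).
Qed.

Lemma gD a b c q1 q2 : g a b c (PAdd q1 q2) = g a b c q1 + g a b c q2.
Proof.
rewrite /g (_ : vf_scale (sc (PAdd q1 q2)) (Xb c) =
   vf_add (vf_scale (sc q1) (Xb c)) (vf_scale (sc q2) (Xb c))); last first.
  by apply/funext => r; rewrite /vf_scale /vf_add /sc /= scalerDl.
case: HT => _ _ h3 _ _; rewrite h3 //; exact/pvf_vf/pvf_sX || exact/pvf_vf/pvf_Xf.
Qed.

Lemma gN a b c q : g a b c (PMul (PC (-1)) q) = - g a b c q.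
Proof.
have : g a b c (PAdd q (PMul (PC (-1)) q)) = 0.
  by apply: g_zero => r; rewrite /sc /=; ring.
by rewrite gD addrC => /eqP; rewrite addr_eq0 => /eqP.
Qed.

Lemma T_expand A B C pA pB pC : tang A -> hasp A pA -> tang B -> hasp B pB ->
  tang C -> hasp C pC ->
  T A B C = \sum_(a < 3) \sum_(b < 3) \sum_(c < 3) g a b c (PMul (PMul (pA a) (pB b)) (pC c)).
Proof.
move=> tA hA tB hB tC hC.
have pA' : pvf A by split=> //; exists pA.
have pB' : pvf B by split=> //; exists pB.
have pC' : pvf C by split=> //; exists pC.
case: HT => _ _ _ h4 h5.
have -> : A = vf_scale (sc (PC 1)) A by apply/funext => r; rewrite /vf_scale /sc /= scale1r.
rewrite (expand_scale (PC 1) tA hA) T_sum1 //; last by move=> a; apply: pvf_sX.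
apply: eq_bigr => a _.
rewrite h4 //; try exact: sc_smooth; try exact/pvf_vf/pvf_Xf; try exact: (pvf_vf pB'); try exact: (pvf_vf pC').
rewrite (expand_scale _ tB hB) T_sum2 //; try exact: pvf_Xf; last by move=> b; apply: pvf_sX.
apply: eq_bigr => b _.
rewrite h5 //; try exact: sc_smooth; try exact/pvf_vf/pvf_Xf; try exact: (pvf_vf pB'); try exact: (pvf_vf pC').
rewrite (expand_scale _ tC hC) T_sum3 //; try exact: pvf_Xf; last by move=> c; apply: pvf_sX.
apply: eq_bigr => c _.
by apply: g_ext => x /=; rewrite mul1r.
Qed.

End Tri.
End VF.

Unset Implicit Arguments. Set Strict Implicit.

Lemma swap2 (N : zmodType) (G : 'I_3 -> 'I_3 -> 'I_3 -> N) :
  \sum_(i < 3) \sum_(j < 3) \sum_(b < 3) G i j b = \sum_(b < 3) \sum_(i < 3) \sum_(j < 3) G i j b.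
Proof.
rewrite (eq_bigr (fun i => \sum_(b < 3) \sum_(j < 3) G i j b)); last first.
  by move=> i _; rewrite exchange_big.
by rewrite exchange_big.
Qed.

Lemma swap5 (N : zmodType) (F : 'I_3 -> 'I_3 -> 'I_3 -> 'I_3 -> 'I_3 -> N) :
  \sum_(i < 3) \sum_(j < 3) \sum_(a < 3) \sum_(b < 3) \sum_(c < 3) F i j a b c =
  \sum_(a < 3) \sum_(b < 3) \sum_(c < 3) \sum_(i < 3) \sum_(j < 3) F i j a b c.
Proof.
rewrite (@swap2 _ (fun i j a => \sum_(b < 3) \sum_(c < 3) F i j a b c)); apply: eq_bigr => a _.
rewrite (@swap2 _ (fun i j b => \sum_(c < 3) F i j a b c)); apply: eq_bigr => b _.
by rewrite (@swap2 _ (fun i j c => F i j a b c)).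
Qed.

Theorem lemma4p5p1 (R : realType) (M : zmodType)
    (T : (S2 R -> 'rV[R]_3) -> (S2 R -> 'rV[R]_3) -> (S2 R -> 'rV[R]_3) -> M) :
  Cinf_trilinear T ->
  \sum_(i < 3) \sum_(j < 3)
     (T (Yf (cross (ebase R i) (ebase R j))) (Yf (ebase R j)) (Yf (ebase R i))
      - T (Xf (ebase R j)) (Xf (cross (ebase R i) (ebase R j))) (Yf (ebase R i)))
  = 0.
Proof.
move=> HT.
have hc i j : forall k, cross (ebase R i) (ebase R j) 0 k = ce R i j k.
  by move=> k; rewrite crossE !ebaseE.
have he j : forall k, ebase R j 0 k = ev R j k by move=> k; rewrite ebaseE.
have step i j : T (Yf (cross (ebase R i) (ebase R j))) (Yf (ebase R j)) (Yf (ebase R i))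
      - T (Xf (ebase R j)) (Xf (cross (ebase R i) (ebase R j))) (Yf (ebase R i)) =
   \sum_(a < 3) \sum_(b < 3) \sum_(c < 3) g T a b c (Pterm R i j a b c).
  rewrite (T_expand HT (tang_Yf _) (hasp_Yf' (hc i j)) (tang_Yf _) (hasp_Yf' (he j))
            (tang_Yf _) (hasp_Yf' (he i))).
  rewrite (T_expand HT (tang_Xf _) (hasp_Xf' (he j)) (tang_Xf _) (hasp_Xf' (hc i j))
            (tang_Yf _) (hasp_Yf' (he i))).
  rewrite -sumrB; apply: eq_bigr => a _.
  rewrite -sumrB; apply: eq_bigr => b _.
  rewrite -sumrB; apply: eq_bigr => c _.
  by rewrite /Pterm gD // gN.
rewrite (eq_bigr (fun i => \sum_(j < 3) \sum_(a < 3) \sum_(b < 3) \sum_(c < 3) g T a b c (Pterm R i j a b c))); last first.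
  by move=> i _; apply: eq_bigr => j _; apply: step.
rewrite swap5; apply: big1 => a _; apply: big1 => b _; apply: big1 => c _.
have g0 : g T a b c (PC 0) = 0 by apply: g_zero.
have gm := big_morph (g T a b c) (gD HT a b c) g0.
under eq_bigr => i _ do rewrite -gm.
rewrite -gm.
apply: g_zero => // r.
have pm x := big_morph (fun p => peval p x) (id1 := 0) (op1 := +%R) (op2 := @PAdd R) (id2 := PC 0) (fun p q => erefl) erefl.
rewrite /sc pm.
under eq_bigr => i _ do rewrite pm.
by rewrite key_id sphere subrr mul0r.
Qed.
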